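(* For every integer $k\ge 1$ and every $t\in\left(0,\tfrac{1}{\sqrt{2}}\right]$, $$\frac{|Q_{k}(t^{2})|}{t}\leq 4k^{2}t+4\sum_{j=1}^{k-1}(k-j)\min\{1,(2j-1)t\}.$$
   Context: $T_k$ denotes the Chebyshev polynomial of the first kind: $T_0(t)=1$, $T_1(t)=t$, $T_{k+1}(t)=2tT_k(t)-T_{k-1}(t)$. For each integer $k\ge 0$, $P_k$ and $Q_k$ are the unique polynomials such that $T_{2k}(t)=(-1)^k+P_k(t^2)$ and $T_{2k+1}(t)=(-1)^k(2k+1)t+t\,Q_k(t^2)$ for all real $t$ (so $P_k(0)=Q_k(0)=0$). *)

(* Defs.v *)
From HB Require Import structures.
From mathcomp Require Import all_boot all_order all_algebra.
Set Implicit Arguments. Unset Strict Implicit. Unset Printing Implicit Defensive.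
Import Order.TTheory GRing.Theory Num.Theory.
Local Open Scope ring_scope.

Fixpoint chebT_pair (R : nzRingType) (n : nat) : {poly R} * {poly R} :=
  match n with
  | 0%N => (1, 'X)
  | n'.+1 => let: (a, b) := chebT_pair R n' in (b, 2%:P * 'X * b - a)
  end.

Definition chebT (R : nzRingType) (n : nat) : {poly R} := (chebT_pair R n).1.

(* Q_k: the polynomial with T_{2k+1}(t) = (-1)^k (2k+1) t + t Q_k(t^2), Q_k(0)=0.
   Since T_{2k+1} is odd of degree 2k+1, Q_k(x) = sum_{i=1}^{k} [coef of t^{2i+1} in T_{2k+1}] x^i. *)
Definition chebQ (R : nzRingType) (k : nat) : {poly R} :=
  \poly_(i < k.+1) (if i == 0%N then 0 else (chebT R (2 * k).+1)`_(2 * i).+1).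

Lemma chebT_rec (R : nzRingType) (n : nat) :
  chebT R n.+2 = 2%:P * 'X * chebT R n.+1 - chebT R n.
Proof. by rewrite /chebT /=; case: (chebT_pair R n). Qed.

(* Main.v *)
Require Import Defs.
From HB Require Import structures.
From mathcomp Require Import all_boot all_order all_algebra.
From mathcomp Require Import ring lra zify.
Import Order.TTheory GRing.Theory Num.Theory.
Local Open Scope ring_scope.

Section Poly.
Variable R : comNzRingType.

Fixpoint Bpair (n : nat) : {poly R} * {poly R} :=
  match n with
  | 0%N => (1, 3%:P - 4%:P * 'X)
  | n'.+1 => let: (a, b) := Bpair n' in (b, (2%:P - 4%:P * 'X) * b - a)
  end.
Definition B n := (Bpair n).1.

Lemma B0 : B 0 = 1. Proof. by []. Qed.
Lemma B1 : B 1 = 3%:P - 4%:P * 'X. Proof. by []. Qed.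
Lemma B_rec n : B n.+2 = (2%:P - 4%:P * 'X) * B n.+1 - B n.
Proof. by rewrite /B /=; case: (Bpair n). Qed.

Lemma chebT4 n : chebT R n.+4 = (4%:P * 'X^2 - 2%:P) * chebT R n.+2 - chebT R n.
Proof. rewrite !chebT_rec. ring. Qed.

Lemma chebT_odd k : chebT R (2 * k).+1 = (-1) ^+ k *: ('X * (B k \Po 'X^2)).
Proof.
suff H : chebT R (2 * k).+1 = (-1) ^+ k *: ('X * (B k \Po 'X^2)) /\
         chebT R (2 * k.+1).+1 = (-1) ^+ k.+1 *: ('X * (B k.+1 \Po 'X^2)) by case: H.
elim: k => [|k [IH1 IH2]].
  split; first by rewrite B0 comp_polyC expr0 scale1r mulr1.
  rewrite B1 chebT_rec chebT_rec /= /chebT /=.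
  rewrite comp_polyB !comp_polyC comp_polyM comp_polyC comp_polyX expr1 scaleN1r.
  ring.
split=> //.
have -> : (2 * k.+2).+1 = (2 * k).+1.+4 by rewrite mulnS mulnS; lia.
rewrite chebT4.
have -> : (2 * k).+1.+2 = (2 * k.+1).+1 by rewrite mulnS; lia.
rewrite IH1 IH2 B_rec comp_polyB comp_polyM comp_polyB !comp_polyC comp_polyM comp_polyC comp_polyX.
rewrite !exprS.
rewrite -!mul_polyC !polyCM. ring.
Qed.

Lemma B_at0 k : (B k).[0] = (2 * k).+1%:R.
Proof.
suff H : (B k).[0] = (2 * k).+1%:R /\ (B k.+1).[0] = (2 * k.+1).+1%:R by case: H.
elim: k => [|k [IH1 IH2]].
  rewrite B0 B1 !hornerE /=; split=> //.
  by rewrite subr0.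
split=> //; rewrite B_rec !hornerE IH1 IH2.
rewrite subr0 -natrM; apply/eqP; rewrite subr_eq -natrD; apply/eqP; congr (_%:R); lia.
Qed.

Lemma B_high k j : (k < j)%N -> (B k)`_j = 0.
Proof.
suff H : (forall j, (k < j)%N -> (B k)`_j = 0) /\ (forall j, (k.+1 < j)%N -> (B k.+1)`_j = 0).
  by case: H => H _; apply: H.
elim: k => [|k [IH1 IH2]].
  split=> i hi; first by rewrite B0 coefC; case: i hi.
  rewrite B1 coefB coefC coefCM coefX.
  by case: i hi => [|[|i]] //= _; rewrite mulr0 subr0.
split=> // i hi; rewrite B_rec coefB mulrBl coefB coefCM -mulrA coefCM coefXM IH2 //.
case: i hi => [|i] //= hi; rewrite IH2 ?IH1; try lia.
  by rewrite !mulr0 !subr0.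
exact: ltnW.
Qed.

Lemma chebQ_eq k : chebQ R k = (-1) ^+ k *: (B k - ((B k)`_0)%:P).
Proof.
apply/polyP => j; rewrite coef_poly coefZ coefB coefC.
case: ifP => hj.
  case: eqP => [->|_]; first by rewrite subrr mulr0.
  rewrite subr0 chebT_odd coefZ coefXM /= coef_comp_poly_Xn //.
  by rewrite dvdn_mulr // mulKn.
case: eqP => [->|_]; first by rewrite subrr mulr0.
rewrite subr0 B_high ?mulr0 //.
by move/negbT: hj; rewrite -leqNgt.
Qed.
End Poly.

Lemma inv_bound (R : realFieldType) (c : R) (u : nat -> R) :
  (forall n, u n.+2 = 2 * c * u n.+1 - u n) ->
  forall n, (1 - c ^+ 2) * u n ^+ 2 <= u 1%N ^+ 2 + u 0%N ^+ 2 - 2 * c * u 1%N * u 0%N.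
Proof.
move=> hrec.
have I : forall n, u n.+1 ^+ 2 + u n ^+ 2 - 2 * c * u n.+1 * u n
                 = u 1%N ^+ 2 + u 0%N ^+ 2 - 2 * c * u 1%N * u 0%N.
  elim=> [//|n IH]; rewrite -IH hrec; ring.
move=> n; rewrite -(I n).
have -> : u n.+1 ^+ 2 + u n ^+ 2 - 2 * c * u n.+1 * u n
   = (u n.+1 - c * u n) ^+ 2 + (1 - c ^+ 2) * u n ^+ 2 by ring.
by rewrite lerDr sqr_ge0.
Qed.

Section Analysis.
Variable R : rcfType.
Variable t : R.
Hypothesis ht0 : 0 < t.
Hypothesis ht1 : t ^+ 2 < 1.

Let x := t ^+ 2.
Let c := 1 - 2 * x.
Definition s n := (B R n).[t ^+ 2].

Lemma s_rec n : s n.+2 = 2 * c * s n.+1 - s n.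
Proof. rewrite /s B_rec hornerD hornerN hornerM hornerD hornerN hornerC hornerCM hornerX /c /x; ring. Qed.

Lemma s0 : s 0 = 1. Proof. by rewrite /s B0 hornerE. Qed.
Lemma s1 : s 1 = 3 - 4 * x. Proof. by rewrite /s B1 hornerD hornerN hornerC hornerCM hornerX. Qed.

Lemma ts_bound n : `|t * s n| <= 1.
Proof.
have := @inv_bound _ c s s_rec n; rewrite s0 s1 /c.
have hx : 0 < x by rewrite /x exprn_gt0.
have hx1 : x < 1 by [].
move=> h.
have h2 : x * s n ^+ 2 <= 1 by nra.
have h3 : (t * s n) ^+ 2 <= 1 by rewrite exprMn.
rewrite ler_norml; apply/andP; split; nra.
Qed.

Lemma d_bound n : `|s n.+1 - s n| <= 2.
Proof.
have hrec : forall n, (s n.+3 - s n.+2) = 2 * c * (s n.+2 - s n.+1) - (s n.+1 - s n).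
  move=> m; rewrite !s_rec; ring.
have := @inv_bound _ c (fun n => s n.+1 - s n) hrec n.
rewrite /= s_rec s0 s1.
have hx : 0 < x by rewrite /x exprn_gt0.
have hx1 : x < 1 by [].
set D := s n.+1 - s n.
have -> : (2 * c * (3 - 4 * x) - 1 - (3 - 4 * x)) ^+ 2 + (3 - 4 * x - 1) ^+ 2 -
   2 * c * (2 * c * (3 - 4 * x) - 1 - (3 - 4 * x)) * (3 - 4 * x - 1) = (1 - c ^+ 2) * 4.
  rewrite /c; ring.
have hc : 0 < 1 - c ^+ 2.
  have -> : 1 - c ^+ 2 = 4 * x * (1 - x) by rewrite /c; ring.
  by rewrite !mulr_gt0 // subr_gt0.
rewrite ler_pM2l // => h2.
rewrite ler_norml; apply/andP; split; nra.
Qed.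

Lemma s_bound n : `|s n| <= (2 * n + 1)%:R.
Proof.
elim: n => [|n IH]; first by rewrite s0 normr1.
have -> : s n.+1 = s n + (s n.+1 - s n) by ring.
apply: (le_trans (ler_normD _ _)).
have -> : (2 * n.+1 + 1)%:R = (2 * n + 1)%:R + 2 :> R by rewrite -natrD; congr _%:R; lia.
by apply: lerD => //; apply: d_bound.
Qed.

Definition m (j : nat) := Num.min 1 ((2 * j - 1)%:R * t).

Lemma sum_step k : t * \sum_(0 <= i < k.+1) `|s i| <= (2 * k + 1)%:R * t + \sum_(1 <= j < k.+1) m j.
Proof.
elim: k => [|k IH].
  by rewrite big_nat1 big_geq // s0 normr1 mulr1 addr0 mul1r.
rewrite big_nat_recr //= (big_nat_recr k.+1) //= mulrDr.
have h1 : t * `|s k.+1| <= 1.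
  by have := ts_bound k.+1; rewrite normrM gtr0_norm.
have h2 : t * `|s k.+1| <= (2 * k.+1 + 1)%:R * t.
  by rewrite mulrC ler_pM2r // s_bound.
have h3 : t * `|s k.+1| <= 2 * t + m k.+1.
  rewrite -lerBlDl /m le_min; apply/andP; split.
  move: h1 ht0; clear; move=> h1 h0; lra.
  have -> : (2 * k.+1 - 1)%:R = (2 * k.+1 + 1)%:R - 2 :> R.
    by apply/eqP; rewrite eq_sym subr_eq -natrD; apply/eqP; congr _%:R; lia.
  lra.
have -> : (2 * k.+1 + 1)%:R = (2 * k + 1)%:R + 2 :> R by rewrite -natrD; congr _%:R; lia.
lra.
Qed.

Lemma sumW k : \sum_(1 <= j < k.+1) (k.+1 - j)%:R * m j =
   \sum_(1 <= j < k) (k - j)%:R * m j + \sum_(1 <= j < k.+1) m j :> R.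
Proof.
case: k => [|k]; first by rewrite !big_geq // addr0.
have e : \sum_(1 <= j < k.+2) (k.+1 - j)%:R * m j = \sum_(1 <= j < k.+1) (k.+1 - j)%:R * m j :> R.
  by rewrite big_nat_recr //= subnn mul0r addr0.
rewrite -e.
rewrite -big_split /=.
apply: eq_big_nat => j /andP [_ hj].
have hj' : (j <= k.+1)%N by [].
by rewrite (subSn hj') -natr1 mulrDl mul1r.
Qed.

Definition q n := s n - (2 * n + 1)%:R.

Lemma q_diff k : q k.+1 - q k = - (4 * x) * \sum_(0 <= i < k.+1) s i.
Proof.
elim: k => [|k IH].
  rewrite /q s0 s1 big_nat1 s0. ring.
rewrite big_nat_recr //= mulrDr -IH /q s_rec /c.
rewrite !natrD !natrM. ring.
Qed.

Lemma main_bound k : `|q k| <= (4 * (k ^ 2)%:R * t + 4 * \sum_(1 <= j < k) (k - j)%:R * m j) * t.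
Proof.
elim: k => [|k IH].
  by rewrite /q s0 subrr normr0 big_geq // !mulr0 mul0r addr0 mul0r.
have -> : q k.+1 = q k + (q k.+1 - q k) by ring.
apply: (le_trans (ler_normD _ _)).
rewrite q_diff normrM normrN.
have hx : `|4 * x| = 4 * t * t.
  rewrite /x ger0_norm; first by rewrite expr2 mulrA.
  by apply: mulr_ge0 => //; apply: sqr_ge0.
rewrite hx.
have h1 := ler_norm_sum (index_iota 0 k.+1) s xpredT.
have h2 := sum_step k.
set A := \sum_(0 <= i < k.+1) `|s i|.
set M := \sum_(1 <= j < k.+1) m j.
have h3 : 4 * t * t * `|\sum_(0 <= i < k.+1) s i| <= 4 * t * t * A.
  by rewrite ler_wpM2l // !mulr_ge0 // ltW.
have h4 : 4 * t * (t * A) <= 4 * t * ((2 * k + 1)%:R * t + M).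
  by rewrite ler_wpM2l // mulr_ge0 // ltW.
rewrite sumW.
have -> : ((k.+1) ^ 2)%:R = (k ^ 2)%:R + (2 * k + 1)%:R :> R.
  by rewrite -natrD; congr _%:R; rewrite -!mulnn; lia.
set S := \sum_(1 <= j < k) (k - j)%:R * m j.
move: IH h3 h4.
rewrite -/S -/M.
move: (`|q k|) (`|\sum_(0 <= i < k.+1) s i|) A M S ((k ^ 2)%:R : R) ((2 * k + 1)%:R : R) => a b A' M' S' N2 N.
move=> IH h3 h4.
clear -IH h3 h4.
lra.
Qed.
End Analysis.

Theorem mainTheorem3 (R : rcfType) (k : nat) (t : R) :
  (1 <= k)%N -> 0 < t -> t <= (Num.sqrt 2)^-1 ->
  `|(chebQ R k).[t ^+ 2]| / t <=
    4 * (k ^ 2)%:R * t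
    + 4 * \sum_(1 <= j < k) (k - j)%:R * Num.min 1 ((2 * j - 1)%:R * t).
Proof.
move=> hk ht0 hts.
have ht1 : t ^+ 2 < 1.
  have hsq : (Num.sqrt 2)^-1 ^+ 2 = 2^-1 :> R by rewrite exprVn sqr_sqrtr // ler0n.
  have h : t ^+ 2 <= (Num.sqrt 2)^-1 ^+ 2.
    by rewrite !expr2; apply: ler_pM => //; exact: ltW.
  rewrite hsq in h.
  apply: (le_lt_trans h).
  by rewrite invf_lt1 // ltr1n.
rewrite chebQ_eq hornerZ hornerD hornerN hornerC -horner_coef0 B_at0.
rewrite normrM normrX normrN normr1 expr1n mul1r.
rewrite ler_pdivrMr //.
have := @main_bound R t ht0 ht1 k.
by rewrite /q /s /m addn1.
Qed.
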